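(* For every $n\in\mathbb{N}$ and $\xi>0$ there is an interior point fingerprinting code for $n$ users with completeness error $\gamma=0$ and soundness error $\xi$ on a totally ordered domain $X_n$ of size $|X_n|\le\mathrm{tower}^{(n+\log^*(2n^2/\xi))}(1)$.
   Context: $\mathrm{tower}^{(0)}(x)=x$ and $\mathrm{tower}^{(k)}(x)=2^{\mathrm{tower}^{(k-1)}(x)}$; $\log^*$ is the iterated base-2 logarithm. An interior point fingerprinting code over a totally ordered $X$ for $n$ users is a pair of randomized algorithms $(\mathrm{Gen},\mathrm{Trace})$, possibly sharing state: $\mathrm{Gen}$ samples a codebook $C=(x_1,\dots,x_n)\in X^n$; $\mathrm{Trace}(x)$ outputs a user $i\in\{1,\dots,n\}$ or $\bot$. For a coalition $T\subseteq\{1,\dots,n\}$ and pirate algorithm $\mathcal{A}:X^{|T|}\to X$ given $C|_T=(x_i)_{i\in T}$, the output $x=\mathcal{A}(C|_T)$ is feasible if $\min_{i\in T}x_i\le x\le\max_{i\in T}x_i$. Completeness error $\gamma$ and soundness error $\xi$ mean: for all $T$ and all $\mathcal{A}$, $\Pr[\mathrm{Trace}(x)=\bot\wedge x\text{ feasible}]\le\gamma$ and $\Pr[\mathrm{Trace}(x)\in\{1,\dots,n\}\setminus T]\le\xi$, over the coins of $\mathrm{Gen},\mathrm{Trace},\mathcal{A}$. *)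

(* Defs.v *)
From mathcomp Require Import all_boot all_order all_algebra.
From mathcomp Require Import boolp reals exp.
Set Implicit Arguments. Unset Strict Implicit. Unset Printing Implicit Defensive.
Import Order.TTheory GRing.Theory Num.Theory.
Local Open Scope ring_scope.

Definition tower (k x : nat) : nat := iter k (fun y => (2 ^ y)%N) x.

Section LogStar.
Variable R : realType.

Definition log2 (z : R) : R := ln z / ln 2.

Definition logstar (z : R) : nat :=
  match pselect (exists k : nat, iter k log2 z <= 1) with
  | left H => ex_minn H
  | right _ => 0%N
  end.

Definition is_distr (T : finType) (p : T -> R) : Prop :=
  (forall t, 0 <= p t) /\ \sum_(t : T) p t = 1.

(* feasibility of pirate output x for coalition T and codebook c:
   min_{i in T} c i <= x <= max_{i in T} c i  (false for empty T) *)
Definition feasible (n m : nat) (T : {set 'I_n}) (c : 'I_n -> 'I_m) (x : 'I_m)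
  : bool :=
  [exists i in T, (c i <= x)%N] && [exists j in T, (x <= c j)%N].

(* Probability of an event over the coins of Gen (shared state s), the
   pirate A (output x) and Trace (output o). *)
Definition prob_event (n m : nat) (S : finType) (gen : S -> R)
  (cb : S -> 'I_n -> 'I_m) (tr : S -> 'I_m -> option 'I_n -> R)
  (A : ('I_n -> 'I_m) -> 'I_m -> R)
  (E : S -> 'I_m -> option 'I_n -> bool) : R :=
  \sum_(s : S) \sum_(x : 'I_m) \sum_(o : option 'I_n)
     (if E s x o then gen s * A (cb s) x * tr s x o else 0).

(* The state space S is shared by Gen and Trace: gen is the
   distribution of the state, cb s the codebook, tr s x the output
   distribution of Trace(x). *)
Definition is_ipfc (n m : nat) (S : finType) (gen : S -> R)
  (cb : S -> 'I_n -> 'I_m) (tr : S -> 'I_m -> option 'I_n -> R)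
  (gamma xi : R) : Prop :=
  is_distr gen /\ (forall s x, is_distr (tr s x)) /\
  forall (T : {set 'I_n}) (A : ('I_n -> 'I_m) -> 'I_m -> R),
    (forall c, is_distr (A c)) ->
    (forall c c', (forall i, i \in T -> c i = c' i) -> forall x, A c x = A c' x) ->
    prob_event gen cb tr A (fun s x o => (o == None) && feasible T (cb s) x)
      <= gamma /\
    prob_event gen cb tr A
      (fun s x o => if o is Some i then i \notin T else false) <= xi.

End LogStar.

(* Main.v *)
Require Import Defs.
From mathcomp Require Import all_boot all_order all_algebra.
From mathcomp Require Import boolp reals exp.
From mathcomp Require Import all_fingroup.
From mathcomp Require Import zify.
Set Implicit Arguments. Unset Strict Implicit. Unset Printing Implicit Defensive.
Import Order.TTheory GRing.Theory Num.Theory.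

Fixpoint tv (B : nat) (f : nat -> nat) (y : nat) : nat :=
  match y with 0 => 0 | y'.+1 => tv B f y' * B + f y' end.

Section Arith.
Variables (B : nat) (f : nat -> nat).
Hypothesis fB : forall i, f i < B.

Lemma tv_split y e : exists2 w, w < B ^ e & tv B f (y + e) = tv B f y * B ^ e + w.
Proof.
elim: e => [|e [w wlt IH]]; first by exists 0; rewrite ?expn0 ?addn0 ?muln1.
exists (w * B + f (y + e)); last by rewrite addnS /= IH expnSr mulnDl mulnA addnA.
rewrite expnSr.
have h := fB (y + e).
have : (w.+1 * B <= B ^ e * B) by rewrite leq_mul2r wlt orbT.
rewrite mulSn; lia.
Qed.

Lemma Bpos : 0 < B. Proof. exact: leq_ltn_trans (fB 0). Qed.

Lemma tv_lt y : tv B f y < B ^ y.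
Proof. by have [w wl] := tv_split 0 y; rewrite add0n /= mul0n add0n => ->. Qed.

Lemma tv_refine y y' : y <= y' -> tv B f y' %/ B ^ (y' - y) = tv B f y.
Proof.
move=> le; have [w wl e] := tv_split y (y' - y).
by rewrite subnKC // in e; rewrite e divnMDl ?expn_gt0 ?Bpos // divn_small // addn0.
Qed.

Lemma tv_digit y : tv B f y.+1 %% B = f y.
Proof. by rewrite /= modnMDl modn_small. Qed.

Lemma tv_dep (g : nat -> nat) y : (forall i, i < y -> f i = g i) -> tv B f y = tv B g y.
Proof.
elim: y => //= y IH H; rewrite IH ?H // => i lt; apply: H; exact: ltnW.
Qed.
End Arith.

Definition badb n (T : {set 'I_n}) (o : option 'I_n) : bool :=
  if o is Some i then i \notin T else false.

Lemma bigmin_le_seq (T : eqType) (s : seq T) (F : T -> nat) d x :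
  x \in s -> \big[minn/d]_(i <- s) F i <= F x.
Proof.
elim: s => // a s IH; rewrite inE big_cons => /orP [/eqP ->|xs]; first exact: geq_minl.
exact: leq_trans (geq_minr _ _) (IH xs).
Qed.

Lemma Some_inj (T : Type) (a b : T) : Some a = Some b -> a = b.
Proof. by case. Qed.

Lemma Some0_lift n' (i : 'I_n') : Some (@ord0 n') <> Some (lift ord0 i).
Proof. move=> h; have e := Some_inj h; have := neq_lift ord0 i; by rewrite -e eqxx. Qed.

Lemma insub_some m' p (y : 'I_m') : (insub p : option 'I_m') = Some y -> val y = p.
Proof.
rewrite /insub; case: {-}_ / idP => // h e; have := Some_inj e => <- //.
Qed.

Lemma insub_none m' p : (insub p : option 'I_m') = None -> (m' <= p)%N.
Proof. rewrite /insub; case: {-}_ / idP => // h _; by rewrite leqNgt; apply/negP. Qed.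

Section Step.
Variables (k n m : nat) (S : finType) (cb : S -> 'I_n -> 'I_m)
  (tr : S -> 'I_m -> option 'I_n).
Local Notation B := k.+2.
Definition Rsp := {ffun 'I_m -> 'I_k.+1}.
Definition dn (r : Rsp) (i : nat) : nat :=
  if (insub i : option 'I_m) is Some j then (val (r j)).+1 else 0.
Lemma dnB r i : dn r i < B.
Proof. rewrite /dn; case: (insub i : option 'I_m) => [j|//]; by case: (r j). Qed.

Definition trunc (r : Rsp) y := tv B (dn r) y * B ^ (m - y).

Lemma trunc_lt r y : y <= m -> trunc r y < B ^ m.
Proof.
move=> ym; rewrite /trunc -{2}(subnKC ym) expnD ltn_pmul2r ?expn_gt0 //.
exact (tv_lt (dnB r) y).
Qed.

Lemma trunc_mono r y y' : y <= y' -> y' <= m -> trunc r y <= trunc r y'.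
Proof.
move=> le le'; have [w _ e] := tv_split (dnB r) y (y' - y).
rewrite subnKC // in e.
rewrite /trunc e mulnDl -mulnA -expnD.
have -> : y' - y + (m - y') = m - y by lia.
exact: leq_addr.
Qed.

Lemma dn_ord r (j : 'I_m) : dn r j = (val (r j)).+1.
Proof. by rewrite /dn valK. Qed.

Lemma Bexp_gt0 e : 0 < B ^ e. Proof. by rewrite expn_gt0. Qed.

Lemma trunc_m r : trunc r m = tv B (dn r) m.
Proof. by rewrite /trunc subnn expn0 muln1. Qed.

Lemma window r y x : y <= m -> trunc r y <= x -> x <= trunc r m ->
  x %/ B ^ (m - y) = tv B (dn r) y.
Proof.
move=> ym lo hi; apply/eqP; rewrite eqn_leq; apply/andP; split.
  rewrite -ltnS ltn_divLR ?Bexp_gt0 //.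
  have [w wl e] := tv_split (dnB r) y (m - y).
  rewrite subnKC // in e; rewrite trunc_m e in hi.
  rewrite mulSn; lia.
by rewrite leq_divRL ?Bexp_gt0.
Qed.

Definition pfun r (x : nat) : nat :=
  \max_(y < m.+1 | x %/ B ^ (m - y) == tv B (dn r) y) (val y).

Lemma pfun_ge r x y : y <= m -> x %/ B ^ (m - y) = tv B (dn r) y -> y <= pfun r x.
Proof.
move=> ym e; rewrite /pfun.
have yl : y < m.+1 by [].
by apply: (leq_bigmax_cond (Ordinal yl)) => /=; rewrite e.
Qed.

Lemma pfun_spec r x : x < B ^ m ->
  pfun r x <= m /\ x %/ B ^ (m - pfun r x) = tv B (dn r) (pfun r x).
Proof.
move=> xl.
have P0 : (ord0 : 'I_m.+1) \in [pred y : 'I_m.+1 | x %/ B ^ (m - y) == tv B (dn r) y].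
  by rewrite inE /= subn0 divn_small.
have nz : 0 < #|[pred y : 'I_m.+1 | x %/ B ^ (m - y) == tv B (dn r) y]|.
  by apply/card_gt0P; exists ord0.
case: (eq_bigmax_cond (fun y : 'I_m.+1 => val y) nz) => y0 Py0 e.
rewrite /pfun; rewrite inE in Py0.
have -> : \max_(y < m.+1 | x %/ B ^ (m - y) == tv B (dn r) y) val y = val y0 by exact: e.
split; first by rewrite -ltnS ltn_ord.
exact/eqP.
Qed.

Lemma pfun_digit r x (j : 'I_m) : x < B ^ m -> j < pfun r x ->
  (x %/ B ^ (m - j.+1)) %% B = (val (r j)).+1.
Proof.
move=> xl jp; have [pm e] := pfun_spec r xl.
set p := pfun r x in jp pm e *.
have -> : m - j.+1 = (m - p) + (p - j.+1) by lia.
rewrite expnD divnMA e tv_refine //; last exact: dnB.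
by rewrite tv_digit ?dn_ord //; exact: dnB.
Qed.

Definition cwo r (y : 'I_m) : 'I_(B ^ m) := Ordinal (trunc_lt r (ltnW (ltn_ord y))).
Definition topw r : 'I_(B ^ m) := Ordinal (trunc_lt r (leqnn m)).
Definition cbo' r (c : 'I_n -> 'I_m) (u : 'I_n.+1) : 'I_(B ^ m) :=
  if unlift ord0 u is Some i then cwo r (c i) else topw r.
Definition ymin s := \big[minn/m]_(i < n) val (cb s i).
Definition jstar s := \max_(i < n) val (cb s i).
Definition So := (S * Rsp)%type.
Definition cbo (sr : So) := cbo' sr.2 (cb sr.1).
Definition tro (sr : So) (x : 'I_(B ^ m)) : option 'I_n.+1 :=
  if (trunc sr.2 (ymin sr.1) <= x) && (x <= trunc sr.2 m) then
    match (insub (pfun sr.2 x) : option 'I_m) with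
    | Some y => if tr sr.1 y is Some i then Some (lift ord0 i) else Some ord0
    | None => Some ord0 end
  else None.

Lemma ymin_le s : ymin s <= m.
Proof. by rewrite /ymin; elim/big_ind: _ => [//| a b ha _ | i _]; [exact: leq_trans (geq_minl a b) ha | by case: (cb s i) => j /= /ltnW]. Qed.

Lemma ymin_le_i s i : ymin s <= cb s i.
Proof. rewrite /ymin; apply: bigmin_le_seq; exact: mem_index_enum. Qed.

Lemma cbo_range sr u : trunc sr.2 (ymin sr.1) <= cbo sr u <= trunc sr.2 m.
Proof.
have cm (y : 'I_m) : (y <= m)%N by apply: ltnW; apply: ltn_ord.
rewrite /cbo /cbo'; destruct (unlift ord0 u) as [i|]; apply/andP; split => /=.
- exact: (trunc_mono _ (ymin_le_i _ _) (cm _)).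
- exact: (trunc_mono _ (cm _) (leqnn m)).
- exact: (trunc_mono _ (ymin_le _) (leqnn m)).
- exact: leqnn.
Qed.

Definition scomp (n' m' : nat) (S' : finType) (cb' : S' -> 'I_n' -> 'I_m')
  (tr' : S' -> 'I_m' -> option 'I_n') :=
  forall s (x : 'I_m') i j, (cb' s i <= x)%N -> (x <= cb' s j)%N -> tr' s x != None.

Lemma jstar_ge s i : (cb s i <= jstar s)%N.
Proof. by rewrite /jstar; apply: (leq_bigmax i). Qed.

Lemma jstar_lt s : 0 < m -> jstar s < m.
Proof.
move=> m0; rewrite /jstar; elim/big_ind: _ => [//| a b ha hb | i _].
  by rewrite gtn_max ha hb.
by case: (cb s i).
Qed.

Lemma tro_lift sr x i : tro sr x = Some (lift ord0 i) ->
  exists2 y : 'I_m, (insub (pfun sr.2 x) : option 'I_m) = Some y & tr sr.1 y = Some i.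
Proof.
rewrite /tro; case: ifP => // _.
case: (insub (pfun sr.2 x) : option 'I_m) => [y|]; last first.
  by move/Some0_lift.
case E: (tr sr.1 y) => [i'|]; last by move/Some0_lift.
move=> h; have e := lift_inj (Some_inj h); rewrite -e; by exists y.
Qed.

Lemma zero_digit sr (x : 'I_(B ^ m)) : 0 < m -> scomp cb tr ->
  tro sr x = Some ord0 ->
  (x %/ B ^ (m - (jstar sr.1).+1)) %% B = dn sr.2 (jstar sr.1).
Proof.
move=> m0 sc; rewrite /tro; case: ifP => // /andP [lo hi] E0.
set s := sr.1; set r := sr.2; set p := pfun r x.
have pge : ymin s <= p.
  by apply: pfun_ge; [exact: ymin_le | apply: window => //; exact: ymin_le].
have jm := jstar_lt s m0.
suff jp : jstar s < p.
  have := pfun_digit (j:=Ordinal jm) (ltn_ord x) jp => /= ->.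
  by rewrite -(dn_ord r (Ordinal jm)).
move: E0; case EI: (insub p : option 'I_m) => [y|]; last first.
  by move=> _; have mp := insub_none EI; exact: leq_trans jm mp.
have ey := insub_some EI.
case E: (tr s y) => [i|] /=.
  by move=> /esym /Some0_lift.
move=> _; rewrite ltnNge; apply/negP => pj.
have [ex1|nex1] := boolP [exists i, (cb s i <= y)%N]; last first.
  have : y < ymin s.
    rewrite /ymin; elim/big_ind: _ => [|a b ha hb|i _]; first by rewrite ltn_ord.
      by rewrite leq_min ha hb.
    by move: nex1; rewrite negb_exists => /forallP /(_ i); rewrite -ltnNge.
  by rewrite ey ltnNge pge.
have [ex2|nex2] := boolP [exists j, (y <= cb s j)%N].
  case/existsP: ex1 => i hi1; case/existsP: ex2 => j hj.
  by move: (sc s y i j hi1 hj); rewrite E.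
case/existsP: ex1 => i hi1.
have allj : forall j, cb s j < y.
  by move=> j; move: nex2; rewrite negb_exists => /forallP /(_ j); rewrite -ltnNge.
have y0 : 0 < y by apply: leq_ltn_trans (allj i).
have : jstar s < y.
  rewrite /jstar; elim/big_ind: _ => [//|a b ha hb|j _]; first by rewrite gtn_max ha hb.
  exact: allj.
by rewrite ey ltnNge pj.
Qed.

Lemma cbo_fresh (r r' : Rsp) (c : 'I_n -> 'I_m) (T : {set 'I_n.+1}) j : ord0 \notin T ->
  (forall i, (val (c i) <= j)%N) -> (forall i : 'I_m, val i != j -> r i = r' i) ->
  forall u, u \in T -> cbo' r c u = cbo' r' c u.
Proof.
move=> n0 cj rr u uT; rewrite /cbo'.
case: unliftP uT => [i ->|->] uT; last by rewrite uT in n0.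
apply: val_inj => /=; rewrite /trunc; congr (_ * _); apply: tv_dep => i' lt.
rewrite /dn; case: insubP => [j' _ ej'|//]; rewrite rr //.
by rewrite ej'; apply: contraTneq (leq_trans lt (cj i)) => ->; rewrite ltnn.
Qed.
End Step.

Local Open Scope ring_scope.

Section Gen.
Variable R : realType.

Lemma sum_pick (m : nat) (p : nat) (F : 'I_m -> R) :
  \sum_(y : 'I_m) (if p == val y then F y else 0) =
  if (insub p : option 'I_m) is Some y then F y else 0.
Proof.
case: insubP => [y0 _ e|nlt].
  rewrite (bigD1 y0) //= e eqxx big1 ?addr0 // => y ne.
  case: eqP => // ep; have eyy : y = y0 by apply: val_inj; rewrite /= -ep e.
  by rewrite eyy eqxx in ne.
apply: big1 => y _; case: eqP => // ep; by rewrite ep ltn_ord in nlt.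
Qed.

Lemma fresh (I : finType) (K : nat) (J : I) (a0 : 'I_K.+1)
  (H : {ffun I -> 'I_K.+1} -> R) :
  (forall r r' : {ffun I -> 'I_K.+1}, (forall i, i != J -> r i = r' i) -> H r = H r') ->
  (K.+1)%:R * \sum_(r : {ffun I -> 'I_K.+1}) (if r J == a0 then H r else 0) = \sum_r H r.
Proof.
move=> HH.
have step : forall a, \sum_(r : {ffun I -> 'I_K.+1}) (if r J == a then H r else 0) =
                     \sum_(r : {ffun I -> 'I_K.+1}) (if r J == a0 then H r else 0).
  move=> a.
  pose sg (r : {ffun I -> 'I_K.+1}) : {ffun I -> 'I_K.+1} :=
    [ffun i => if i == J then tperm a0 a (r i) else r i].
  have sgK : involutive sg.
    by move=> r; apply/ffunP => i; rewrite !ffunE; case: eqP => // ->; rewrite tpermK.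
  rewrite (reindex_inj (inv_inj sgK)); apply: eq_bigr => r _.
  have -> : H (sg r) = H r by apply: HH => i ne; rewrite ffunE (negbTE ne).
  by rewrite ffunE eqxx -(inj_eq (@perm_inj _ (tperm a0 a))) tpermK tpermR.
have -> : \sum_r H r = \sum_(a : 'I_K.+1) \sum_(r : {ffun I -> 'I_K.+1}) (if r J == a then H r else 0).
  rewrite exchange_big; apply: eq_bigr => r _.
  by rewrite (bigD1 (r J)) //= eqxx big1 ?addr0 // => a /negbTE; rewrite eq_sym => ->.
have -> : \sum_(a : 'I_K.+1) \sum_(r : {ffun I -> 'I_K.+1}) (if r J == a then H r else 0)
  = \sum_(a : 'I_K.+1) \sum_(r : {ffun I -> 'I_K.+1}) (if r J == a0 then H r else 0).
  by apply: eq_bigr => a _; exact: step.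
by rewrite sumr_const card_ord mulr_natl.
Qed.
End Gen.

Definition dsound (R : realType) n m (S : finType) (cb : S -> 'I_n -> 'I_m)
  (tr : S -> 'I_m -> option 'I_n) (eps : R) :=
  forall (T : {set 'I_n}) (A : ('I_n -> 'I_m) -> 'I_m -> R),
  (forall c x, 0 <= A c x) -> (forall c, \sum_x A c x <= 1) ->
  (forall c c', (forall i, i \in T -> c i = c' i) -> forall x, A c x = A c' x) ->
  \sum_(s : S) \sum_(x : 'I_m) (if badb T (tr s x) then A (cb s) x else 0)
    <= eps * #|S|%:R.

Lemma sum_pair (R : realType) (S1 S2 : finType) (Q : S1 * S2 -> R) :
  \sum_p Q p = \sum_s1 \sum_s2 Q (s1, s2).
Proof. by rewrite pair_big; apply: eq_bigr => -[]. Qed.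

Lemma arith (R : realType) (eps c : R) (a b : nat) :
  eps * a%:R *+ b + c * b%:R *+ a <= (eps + c) * (a * b)%:R.
Proof.
rewrite natrM -(mulr_natr (eps * a%:R) b) -(mulr_natr (c * b%:R) a).
rewrite mulrDl -mulrA -mulrA [b%:R * a%:R]mulrC.
exact: lexx.
Qed.

Section StepR.
Variables (R : realType) (k n m : nat) (S : finType) (cb : S -> 'I_n -> 'I_m)
  (tr : S -> 'I_m -> option 'I_n) (eps : R).
Hypotheses (m0 : (0 < m)%N) (sc : scomp cb tr) (ds : dsound cb tr eps).
Local Notation B := k.+2.

Lemma scomp_step : scomp (cbo (k:=k) cb) (tro cb tr).
Proof.
move=> sr x u v hu hv; rewrite /tro.
have /andP [l1 _] := cbo_range cb sr u; have /andP [_ h2] := cbo_range cb sr v.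
rewrite (leq_trans l1 hu) (leq_trans hv h2) /=.
case: (insub _) => [y|] //; by case: (tr _ _).
Qed.


Lemma dsound_step : dsound (cbo (k:=k) cb) (tro cb tr) (eps + (k.+1)%:R^-1).
Proof.
move=> T A A0 A1 Ac.
set T' := [set i | lift ord0 i \in T].
pose A' (r : Rsp k m) (c : 'I_n -> 'I_m) (y : 'I_m) :=
  \sum_(x : 'I_(B ^ m)) (if pfun r x == val y then A (cbo' r c) x else 0).
pose P1 (sr : So k m S) (x : 'I_(B ^ m)) :=
  if badb T' (if (insub (pfun sr.2 x) : option 'I_m) is Some y then tr sr.1 y else None)
  then A (cbo cb sr) x else 0.
pose P2 (sr : So k m S) (x : 'I_(B ^ m)) :=
  if (ord0 \notin T) && ((x %/ B ^ (m - (jstar cb sr.1).+1)) %% B == dn sr.2 (jstar cb sr.1))%N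
  then A (cbo cb sr) x else 0.
have pw : forall sr x, (if badb T (tro cb tr sr x) then A (cbo cb sr) x else 0)
                        <= P1 sr x + P2 sr x.
  move=> sr x.
  have g1 : 0 <= P1 sr x by rewrite /P1; case: ifP.
  have g2 : 0 <= P2 sr x by rewrite /P2; case: ifP.
  case E: (tro cb tr sr x) => [u|]; last by rewrite /= addr_ge0.
  case: (unliftP ord0 u) E => [i ->|->] E.
  - have [y ey ty] := tro_lift E.
    rewrite /P1 ey /= ty /= inE.
    by rewrite -[X in X <= _]addr0 lerD.
  - rewrite /=; case: ifP => n0; last by rewrite addr_ge0.
    rewrite /P2 n0 (zero_digit m0 sc E) eqxx /=.
    by rewrite -[X in X <= _]add0r lerD.
apply: le_trans (ler_sum _ (fun sr _ => ler_sum _ (fun x _ => pw sr x))) _.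
rewrite (eq_bigr (fun sr : So k m S => \sum_(x : 'I_(B ^ m)) P1 sr x + \sum_(x : 'I_(B ^ m)) P2 sr x)); last first.
  by move=> sr _; rewrite big_split.
rewrite big_split /=.
have bound1 : \sum_(sr : So k m S) \sum_(x : 'I_(B ^ m)) P1 sr x <= (eps * #|S|%:R) *+ #|{: Rsp k m}|.
  rewrite sum_pair exchange_big /= -sumr_const; apply: ler_sum => r _.
  rewrite (eq_bigr (fun s => \sum_(y : 'I_m) (if badb T' (tr s y) then A' r (cb s) y else 0))); last first.
    move=> s _; symmetry.
    rewrite (eq_bigr (fun y : 'I_m => \sum_(x : 'I_(B ^ m)) (if pfun r x == val y then
         (if badb T' (tr s y) then A (cbo' r (cb s)) x else 0) else 0))); last first.
      move=> y _; case: ifP => _ //; by rewrite big1 // => x _; case: ifP.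
    rewrite exchange_big; apply: eq_bigr => x _; rewrite sum_pick /P1 /=.
    by case: (insub _).
  apply: ds.
  - by move=> c y; apply: sumr_ge0 => x _; case: ifP.
  - move=> c; apply: le_trans (A1 (cbo' r c)); rewrite /A' exchange_big.
    apply: ler_sum => x _; rewrite sum_pick; by case: (insub _).
  - move=> c c' H y; rewrite /A'; apply: eq_bigr => x _.
    rewrite (Ac (cbo' r c) (cbo' r c')) // => u uT; rewrite /cbo'.
    by case: unliftP uT => [i ->|->] uT //; rewrite H // inE.
have bound2 : \sum_(sr : So k m S) \sum_(x : 'I_(B ^ m)) P2 sr x
    <= ((k.+1)%:R^-1 * #|{: Rsp k m}|%:R) *+ #|S|.
  have kp : 0 <= ((k.+1)%:R^-1 * #|{: Rsp k m}|%:R :> R) by rewrite mulr_ge0 ?invr_ge0.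
  have [n0|n0] := boolP (ord0 \in T).
    rewrite big1; first by rewrite mulrn_wge0.
    by move=> sr _; rewrite big1 // => x _; rewrite /P2 n0.
  rewrite sum_pair -sumr_const; apply: ler_sum => s _.
  set J : 'I_m := Ordinal (jstar_lt cb s m0).
  have dJ : forall r, dn r (jstar cb s) = (val (r J)).+1 := fun r => dn_ord r J.
  rewrite exchange_big /=.
  apply: le_trans (_ : \sum_(x : 'I_(B ^ m)) (k.+1)%:R^-1 *
      \sum_(r : Rsp k m) A (cbo' r (cb s)) x <= _).
    apply: ler_sum => x _.
    have HH : forall r r' : {ffun 'I_m -> 'I_k.+1}, (forall i, i != J -> r i = r' i) ->
        A (cbo' r (cb s)) x = A (cbo' r' (cb s)) x.
      move=> r r' rr; apply: Ac => u uT.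
      have rr' : forall i : 'I_m, val i != jstar cb s -> r i = r' i.
        move=> i ne; apply: rr; apply: contra ne => /eqP ->; exact: eqxx.
      exact: (cbo_fresh n0 (jstar_ge cb s) rr' uT).
    rewrite /P2 n0 /=.
    under eq_bigr => r _ do rewrite dJ.
    move: ((x %/ B ^ (m - (jstar cb s).+1)) %% B)%N => [|e'].
      rewrite big1 ?mulr_ge0 ?invr_ge0 ?sumr_ge0 //.
    have [el|eg] := ltnP e' k.+1.
      set a0 : 'I_k.+1 := Ordinal el.
      have -> : \sum_(r : Rsp k m) (if e'.+1 == (val (r J)).+1 then A (cbo' r (cb s)) x else 0)
        = \sum_(r : {ffun 'I_m -> 'I_k.+1}) (if r J == a0 then A (cbo' r (cb s)) x else 0).
        apply: eq_bigr => r _; rewrite eqSS eq_sym.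
        by have -> : (val (r J) == e') = (r J == a0) by [].
      by rewrite -(fresh a0 HH) mulrA mulVf ?mul1r // pnatr_eq0.
    rewrite big1 ?mulr_ge0 ?invr_ge0 ?sumr_ge0 // => r _.
    have ne : (e' == val (r J)) = false.
      by apply/negbTE; rewrite neq_ltn (leq_trans (ltn_ord (r J)) eg) orbT.
    by rewrite eqSS ne.
  rewrite -big_distrr /=; apply: ler_wpM2l; first by rewrite invr_ge0.
  rewrite exchange_big.
  have -> : (#|{: Rsp k m}|%:R : R) = \sum_(r : Rsp k m) 1 by rewrite sumr_const.
  by apply: ler_sum => r _; exact: A1.
apply: le_trans (lerD bound1 bound2) _.
have cp := card_prod S {ffun 'I_m -> 'I_k.+1}.
rewrite cp; exact: arith.
Qed.
End StepR.

Definition mB (B n : nat) : nat := iter n (fun m => (B ^ m)%N) 1%N.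

Lemma mB_gt0 B n : (0 < mB B.+1 n)%N.
Proof. by case: n => //= n; rewrite expn_gt0. Qed.

Lemma code_ex (R : realType) (k n : nat) :
  exists (S : finType) (cb : S -> 'I_n -> 'I_(mB k.+2 n))
         (tr : S -> 'I_(mB k.+2 n) -> option 'I_n),
    [/\ (0 < #|S|)%N, scomp cb tr & dsound cb tr (n%:R / (k.+1)%:R : R)].
Proof.
elim: n => [|n [S [cb [tr [S0 sc ds]]]]].
  exists unit, (fun _ _ => ord0), (fun _ _ => None); split.
  - by rewrite card_unit.
  - by move=> s x [].
  - move=> T A _ _ _; rewrite big1 ?mul0r // => s _; by rewrite big1.
have m0 : (0 < mB k.+2 n)%N by exact: mB_gt0.
exists ((S * {ffun 'I_(mB k.+2 n) -> 'I_k.+1})%type : finType), (cbo cb), (tro cb tr); split.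
- rewrite card_prod muln_gt0 S0 card_ffun expn_gt0 card_ord //.
- exact: scomp_step.
- have -> : (n.+1%:R / (k.+1)%:R : R) = n%:R / (k.+1)%:R + (k.+1)%:R^-1.
    by rewrite -natr1 mulrDl mul1r.
  exact: dsound_step m0 sc ds.
Qed.

Lemma sum_opt (R : realType) n (t : option 'I_n) (P : option 'I_n -> bool) (g : R) :
  \sum_(o : option 'I_n) (if P o then g * (o == t)%:R else 0) = if P t then g else 0.
Proof.
rewrite (bigD1 t) //= eqxx mulr1 big1 ?addr0 // => o ne.
by rewrite (negbTE ne) mulr0; case: ifP.
Qed.

Lemma to_ipfc (R : realType) n m (S : finType) (cb : S -> 'I_n -> 'I_m)
  (tr : S -> 'I_m -> option 'I_n) (eps xi : R) :
  (0 < #|S|)%N -> scomp cb tr -> dsound cb tr eps -> eps <= xi ->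
  is_ipfc (fun _ => (#|S|%:R)^-1) cb (fun s x o => ((o == tr s x)%:R : R)) 0 xi.
Proof.
move=> S0 sc ds ex.
have Sp : (0 : R) < #|S|%:R by rewrite ltr0n.
split; [|split].
- split => [s|]; first by rewrite invr_ge0 ler0n.
  by rewrite sumr_const -(mulr_natr (#|S|%:R^-1)) mulVf // gt_eqF.
- move=> s x; split => [o|]; first by case: (_ == _).
  rewrite (bigD1 (tr s x)) //= eqxx big1 ?addr0 // => o ne; by rewrite (negbTE ne).
move=> T A Ad Ac; split.
- rewrite /prob_event big1 // => s _; rewrite big1 // => x _.
  rewrite (eq_bigr (fun o => if (o == None) && feasible T (cb s) x
       then (#|S|%:R^-1 * A (cb s) x) * (o == tr s x)%:R else 0)) //.
  rewrite sum_opt; case: ifP => // /andP [/eqP tn /andP [/existsP [i /andP [iT hi]]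
    /existsP [j /andP [jT hj]]]].
  by move: (sc s x i j hi hj); rewrite tn.
- rewrite /prob_event.
  rewrite (eq_bigr (fun s => #|S|%:R^-1 * \sum_x (if badb T (tr s x) then A (cb s) x else 0))); last first.
    move=> s _; rewrite mulr_sumr; apply: eq_bigr => x _.
    rewrite (eq_bigr (fun o => if badb T o
       then (#|S|%:R^-1 * A (cb s) x) * (o == tr s x)%:R else 0)) //.
    by rewrite sum_opt; case: ifP; rewrite ?mulr0.
  rewrite -mulr_sumr.
  have := ds T A (fun c x => proj1 (Ad c) x) (fun c => ltac:(by rewrite (proj2 (Ad c)))) Ac.
  move=> h; apply: le_trans (ler_wpM2l _ h) _; first by rewrite invr_ge0 ler0n.
  by rewrite mulrC -mulrA mulfV ?gt_eqF // mulr1.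
Qed.

Section LS.
Variable R : realType.

Lemma ln2_gt0 : (0 : R) < ln 2.
Proof. by apply: ln_gt0; rewrite ltr1n. Qed.

Lemma log2_le (z : R) (T : nat) : z <= (2 ^ T)%:R -> log2 z <= T%:R.
Proof.
move=> h; rewrite /log2 ler_pdivrMr ?ln2_gt0 //.
have [z1|z1] := lerP z 1.
  by apply: le_trans (ln_le0 z1) _; rewrite mulr_ge0 // ltW // ln2_gt0.
have zp : 0 < z by apply: lt_trans z1.
rewrite natrX in h.
have : ln z <= ln ((2 : R) ^+ T).
  by rewrite ler_ln // posrE // exprn_gt0.
move=> h'; apply: le_trans h' _; by rewrite lnXn // mulr_natl.
Qed.

Lemma log2_ge (z : R) (T : nat) : log2 z <= T%:R -> z <= (2 ^ T)%:R.
Proof.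
move=> h; have [z1|z1] := lerP z 1.
  by apply: le_trans z1 _; rewrite ler1n expn_gt0.
have zp : 0 < z by apply: lt_trans z1.
rewrite /log2 ler_pdivrMr ?ln2_gt0 // mulr_natl -lnXn // in h.
by rewrite natrX -ler_ln // posrE // exprn_gt0.
Qed.

Lemma iter_log2_le k (z : R) : z <= (tower k 1)%:R -> iter k (@log2 R) z <= 1.
Proof.
elim: k z => [|k IH] z h //; rewrite iterSr; apply: IH; exact: log2_le.
Qed.

Lemma iter_log2_ge k (z : R) : iter k (@log2 R) z <= 1 -> z <= (tower k 1)%:R.
Proof.
elim: k z => [|k IH] z h //; rewrite iterSr in h; exact: log2_ge (IH _ h).
Qed.

Lemma tower_gt k : (k < tower k 1)%N.
Proof. elim: k => //= k IH; exact: leq_ltn_trans IH (ltn_expl _ (ltnSn 1)). Qed.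

Lemma logstar_spec (z : R) : iter (logstar z) (@log2 R) z <= 1.
Proof.
rewrite /logstar; case: pselect => [H|nH].
  by case: ex_minnP.
exfalso; apply: nH; exists (Num.truncn z).+1.
apply: iter_log2_le; apply: le_trans (ltW (truncnS_gt z)) _.
by rewrite ler_nat; exact: ltnW (tower_gt _).
Qed.

Lemma logstar_bound (z : R) : z <= (tower (logstar z) 1)%:R.
Proof. exact: iter_log2_ge (logstar_spec z). Qed.
End LS.

Lemma two_b b : (2 * b <= 2 ^ b)%N.
Proof.
elim: b => // b IH; rewrite expnS.
case: b IH => // b IH.
have : (2 <= 2 ^ b.+1)%N by rewrite (leq_exp2l 1) //.
lia.
Qed.

Lemma mB_le b B N n : (0 < b)%N -> (0 < B)%N -> (B <= 2 ^ b)%N -> (2 * b <= N)%N ->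
  (iter n (fun m => B ^ m) 1 <= tower n N)%N.
Proof.
move=> b0 B0 Bb bN.
suff inv : (2 * b * iter n (fun m => B ^ m) 1 <= tower n N)%N.
  by apply: leq_trans inv; rewrite leq_pmull // muln_gt0 b0.
elim: n => [|n IH]; first by rewrite /= muln1.
rewrite [iter n.+1 _ _]/= [tower n.+1 N]/=.
set m := iter n _ 1 in IH *.
have m0 : (0 < m)%N by rewrite /m; case: (n) => //= ?; rewrite expn_gt0 B0.
apply: (@leq_trans (2 ^ (2 * b * m))); last by rewrite leq_exp2l.
have e1 : (B ^ m <= 2 ^ (b * m))%N by rewrite expnM leq_exp2r.
have e2 : (2 * b <= 2 ^ (b * m))%N.
  apply: leq_trans (two_b b) _; rewrite leq_exp2l // leq_pmulr //.
have -> : (2 * b * m = b * m + b * m)%N by lia.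
rewrite expnD; apply: leq_mul => //.
Qed.

Unset Implicit Arguments.

Theorem lemmaB4 (R : realType) (n : nat) (xi : R) : 0 < xi ->
  exists (m : nat) (S : finType) (gen : S -> R) (cb : S -> 'I_n -> 'I_m)
         (tr : S -> 'I_m -> option 'I_n -> R),
    (m <= tower (n + logstar (2 * (n%:R) ^+ 2 / xi)) 1)%N /\
    is_ipfc gen cb tr 0 xi.
Proof.
move=> xi0.
set z := 2 * (n%:R : R) ^+ 2 / xi.
have zN := logstar_bound z.
have zx : 2 * (n%:R : R) ^+ 2 <= (tower (logstar z) 1)%:R * xi.
  by rewrite -ler_pdivrMr.
have h1 : 2 * (n%:R : R) <= 2 * n%:R ^+ 2.
  by rewrite ler_pM2l // -natrX ler_nat; nia.
move: zN zx; case: (logstar z) => [|k1] zN zx.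
- have [S [cb [tr [S0 sc ds]]]] := code_ex R 0 n.
  exists (mB 2 n), S, (fun _ => (#|S|%:R)^-1), cb, (fun s x o => ((o == tr s x)%:R : R)); split; first by rewrite addn0.
  apply: (to_ipfc S0 sc ds).
  rewrite divr1; rewrite /= mul1r in zx.
  have x2 : xi <= 2 * xi by rewrite -[X in X <= _]mul1r ler_pM2r // ler1n.
  have : 2 * (n%:R : R) <= 2 * xi by apply: le_trans h1 (le_trans zx x2).
  by rewrite ler_pM2l.
- set N1 := tower k1 1.
  have N1p : (0 < N1)%N by apply: leq_ltn_trans (tower_gt k1); exact: leq0n.
  have N0ge2 : (2 <= 2 ^ N1)%N by rewrite (leq_exp2l 1).
  set k := (2 ^ N1 - 2)%N.
  have ek : k.+2 = (2 ^ N1)%N by rewrite /k; lia.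
  have [S [cb [tr [S0 sc ds]]]] := code_ex R k n.
  exists (mB k.+2 n), S, (fun _ => (#|S|%:R)^-1), cb, (fun s x o => ((o == tr s x)%:R : R)); split.
    rewrite /tower iterD -/(tower k1.+1 1) /=.
    apply: (@mB_le N1) => //; first by rewrite ek.
    exact: two_b.
  apply: (to_ipfc S0 sc ds).
  rewrite ler_pdivrMr ?ltr0Sn //.
  have e2n : (tower k1.+1 1 <= 2 * k.+1)%N by rewrite /= -/N1 -ek; lia.
  have e2 : (tower k1.+1 1)%:R * xi <= ((2 * k.+1)%N)%:R * xi.
    by rewrite ler_pM2r // ler_nat.
  rewrite natrM in e2.
  have : 2 * (n%:R : R) <= 2 * ((k.+1)%:R * xi).
    by rewrite mulrA; apply: le_trans h1 (le_trans zx e2).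
  by rewrite ler_pM2l // mulrC.
Qed.
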